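(* Let $\pi=(\sigma,\mathbf z)\in\mathsf{G}_{r,n}$ and let $\mathbf f=f(\pi)$ be its minimum sequence. Then $\phi(\pi)\in\mathsf{G}_{r,n,\mathbf f}$, where $\phi=(\text{B-code})^{-1}\circ(\text{A-code})$.
   Context: $\mathsf{G}_{r,n}=C_r\wr\mathfrak S_n$: pairs $(\sigma,\mathbf z)$, $\sigma\in\mathfrak S_n$, $\mathbf z\in(\mathbb Z/r)^n$, written $\sigma_1^{[z_1]}\cdots\sigma_n^{[z_n]}$ (colors in $\{0,\dots,r-1\}$, read mod $r$). For a nondecreasing integer sequence $\mathbf f=(f_1,\dots,f_n)$ with $1\le f_1\le\cdots\le f_n\le n$, $\mathsf{G}_{r,n,\mathbf f}=\{(\sigma,\mathbf z)\in\mathsf{G}_{r,n}:\sigma(i)\le f_i\ \forall i\}$. The minimum sequence $f(\pi)$ of $\pi=(\sigma,\mathbf z)$ is the componentwise smallest such $\mathbf f$ with $\pi\in\mathsf{G}_{r,n,\mathbf f}$, i.e. $f(\pi)_i=\max\{\sigma_1,\dots,\sigma_i\}$. $\mathsf{CS}_{r,n}=\{(c_1^{[e_1]},\dots,c_n^{[e_n]}):1\le c_i\le i,\ 0\le e_i<r\}$. A-code: $\pi^{(n)}=\pi$; for $j=n,\dots,1$, if base value $j$ is at position $p$ of $\pi^{(j)}$ with color $t$, set $c_j=p,e_j=t$ and delete that letter to get $\pi^{(j-1)}$; A-code$(\pi)=(c_j^{[e_j]})_j$. B-code: $\pi^{(n)}=\pi$; for $j=n,\dots,1$, writing $\pi^{(j)}=\tau_1^{[y_1]}\cdots\tau_j^{[y_j]}$,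 $c_j$ = position of base value $j$, $z$ its color, $e_j\equiv-z\pmod r$ in $\{0,\dots,r-1\}$; if $c_j<j$, $\pi^{(j-1)}$ is obtained by replacing the letter at position $c_j$ by $\tau_j^{[y_j-e_j]}$ and deleting the last letter, and if $c_j=j$ by deleting the last letter; B-code$(\pi)=(c_j^{[e_j]})_j$. Both codes are bijections $\mathsf{G}_{r,n}\to\mathsf{CS}_{r,n}$. *)

(* Defs.v *)
From mathcomp Require Import all_boot.
Set Implicit Arguments. Unset Strict Implicit. Unset Printing Implicit Defensive.

(* A colored permutation pi = sigma_1^[z_1] ... sigma_n^[z_n] is represented by
   its one-line word: a sequence of letters (base value, color).
   Base values are 1..n, colors are in {0,...,r-1}. *)
Definition letter := (nat * nat)%type.
Definition word := seq letter.

Definition base (w : word) : seq nat := map fst w.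

Definition in_G (r n : nat) (w : word) : bool :=
  (size w == n) && perm_eq (base w) (iota 1 n) && all (fun l => l.2 < r) w.

(* membership in G_{r,n,f}: sigma(i) <= f_i for all i (1-based, here 0-based indices) *)
Definition in_Gf (r n : nat) (f : seq nat) (w : word) : bool :=
  in_G r n w && [forall i : 'I_n, nth 0 (base w) i <= nth 0 f i].

Definition minseq (w : word) : seq nat :=
  mkseq (fun i => \max_(k < i.+1) nth 0 (base w) k) (size w).

(* colored code sequences CS_{r,n}: list (c_1^[e_1], ..., c_n^[e_n]) *)
Definition code := seq (nat * nat).

Definition delete_at (p : nat) (w : word) : word := take p w ++ drop p.+1 w.

(* A-code: for j = n..1, c_j = (1-based) position of base value j in pi^(j),
   e_j = its color, then delete that letter. Returns (c_1^[e_1], ..., c_j^[e_j]). *)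
Fixpoint acode_rec (j : nat) (w : word) : code :=
  match j with
  | 0 => [::]
  | j'.+1 =>
      let p := index j (base w) in
      rcons (acode_rec j' (delete_at p w)) (p.+1, (nth (0,0) w p).2)
  end.

Definition Acode (n : nat) (w : word) : code := acode_rec n w.

(* B-code: for j = n..1, c_j = (1-based) position of base value j in pi^(j),
   z its color, e_j = -z mod r in {0..r-1}; if c_j < j, replace the letter at
   position c_j by tau_j^[y_j - e_j] (tau_j^[y_j] the last letter) and delete
   the last letter; if c_j = j, just delete the last letter. *)
Fixpoint bcode_rec (r j : nat) (w : word) : code :=
  match j with
  | 0 => [::]
  | j'.+1 =>
      let p := index j (base w) in               (* c_j = p.+1 *)
      let z := (nth (0,0) w p).2 in
      let e := (r - z %% r) %% r in
      let lst := nth (0,0) w j' in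
      let w' := if p.+1 < j
                then take j' (set_nth (0,0) w p (lst.1, (lst.2 + r - e) %% r))
                else take j' w in
      rcons (bcode_rec r j' w') (p.+1, e)
  end.

Definition Bcode (r n : nat) (w : word) : code := bcode_rec r n w.

(* Main.v *)
Require Import Defs.
From mathcomp Require Import all_boot zify.
Set Implicit Arguments. Unset Strict Implicit. Unset Printing Implicit Defensive.

Lemma nth_base (w : word) i : nth 0 (base w) i = (nth (0,0) w i).1.
Proof. by elim: w i => [|x w IH] [|i] //=. Qed.

Lemma base_set_nth (w : word) p x y :
  base (set_nth (0,0) w p (x,y)) = set_nth 0 (base w) p x.
Proof.
elim: w p => [|a w IH] p; first by rewrite !set_nth_nil; elim: p => //= p ->.
by case: p => [|p] //=; rewrite IH.
Qed.

Lemma base_take n (w : word) : base (take n w) = take n (base w).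
Proof. exact: map_take. Qed.
Lemma base_drop n (w : word) : base (drop n w) = drop n (base w).
Proof. exact: map_drop. Qed.
Lemma base_cat (w1 w2 : word) : base (w1 ++ w2) = base w1 ++ base w2.
Proof. exact: map_cat. Qed.
Lemma base_rcons (w : word) x : base (rcons w x) = rcons (base w) x.1.
Proof. exact: map_rcons. Qed.

Lemma iotaS1 j : iota 1 j.+1 = rcons (iota 1 j) j.+1.
Proof. by have := iotaD 1 j 1; rewrite addn1 => ->; rewrite cats1 add1n. Qed.

Lemma count_rc (T : Type) (a : pred T) s x : count a (rcons s x) = count a s + a x.
Proof. by rewrite -cats1 count_cat /= addn0. Qed.

Lemma cnt_nth (s : seq nat) (a : pred nat) i : i < size s -> a (nth 0 s i) <= count a s.
Proof.
move=> H; rewrite -[in count _ s](cat_take_drop i s) (drop_nth 0 H) count_cat /=; lia.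
Qed.

Lemma cnt_take (s : seq nat) (a : pred nat) j : j < size s ->
  count a s = count a (take j s) + a (nth 0 s j) + count a (drop j.+1 s).
Proof.
move=> H; rewrite -[in count _ s](cat_take_drop j s) (drop_nth 0 H) count_cat /=; lia.
Qed.

Definition bw (r j : nat) (w : word) : word :=
  if (index j.+1 (base w)).+1 < j.+1
  then take j (set_nth (0,0) w (index j.+1 (base w))
          ((nth (0,0) w j).1,
           ((nth (0,0) w j).2 + r - (r - (nth (0,0) w (index j.+1 (base w))).2 %% r) %% r) %% r))
  else take j w.

Definition be (r j : nat) (w : word) : nat :=
  (r - (nth (0,0) w (index j.+1 (base w))).2 %% r) %% r.

Lemma bcode_S r j w : bcode_rec r j.+1 w =
  rcons (bcode_rec r j (bw r j w)) ((index j.+1 (base w)).+1, be r j w).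
Proof. by []. Qed.

Lemma acode_S j s : acode_rec j.+1 s =
  rcons (acode_rec j (delete_at (index j.+1 (base s)) s))
        ((index j.+1 (base s)).+1, (nth (0,0) s (index j.+1 (base s))).2).
Proof. by []. Qed.

Lemma permPn (s1 s2 : seq nat) :
  (forall a : pred nat, @count nat a s1 = @count nat a s2) -> perm_eq s1 s2.
Proof. by move=> H; apply/permP => a; exact: H. Qed.

Lemma perm_facts j (b : seq nat) : perm_eq b (iota 1 j.+1) ->
  [/\ size b = j.+1, index j.+1 b < j.+1, nth 0 b (index j.+1 b) = j.+1,
      uniq b & forall a : pred nat, count a b = count a (iota 1 j) + a j.+1].
Proof.
move=> P; have Hs : size b = j.+1 by rewrite (perm_size P) size_iota.
have Hm : j.+1 \in b by rewrite (perm_mem P) mem_iota; lia.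
apply: And5 => //.
- by rewrite -[X in _ < X]Hs index_mem.
- exact: nth_index.
- by rewrite (perm_uniq P) iota_uniq.
- by move=> a; rewrite (permP P) iotaS1 count_rc.
Qed.

Lemma perm_bw r j w : perm_eq (base w) (iota 1 j.+1) ->
  perm_eq (base (bw r j w)) (iota 1 j).
Proof.
move=> P; have [Hs Hp Hnp _ C] := perm_facts P.
apply: permPn => a; have Ca := C a.
rewrite /bw; set p := index j.+1 (base w).
case: ltnP => Hpj.
- rewrite base_take base_set_nth -nth_base.
  set u := set_nth 0 (base w) p _.
  have Su : size u = j.+1 by rewrite size_set_nth Hs; lia.
  have Cu : count a u = count a (base w) + a (nth 0 (base w) j) - a (j.+1).
    by rewrite count_set_nth_ltn ?Hs // Hnp.
  have Nu : nth 0 u j = nth 0 (base w) j.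
    by rewrite /u nth_set_nth /= gtn_eqF.
  have Hju : j < size u by rewrite Su.
  have Tu := cnt_take a Hju; rewrite drop_oversize ?Su // in Tu.
  rewrite Nu /= in Tu.
  have Hps : p < size (base w) by rewrite Hs.
  have H1 := cnt_nth a Hps; rewrite Hnp in H1.
  lia.
- have pj : p = j by lia.
  rewrite base_take.
  have Hju : j < size (base w) by rewrite Hs.
  have Tu := cnt_take a Hju; rewrite drop_oversize ?Hs // in Tu.
  have Hnj : nth 0 (base w) j = j.+1 by rewrite -[in nth _ _ j]pj.
  rewrite Hnj /= in Tu.
  lia.
Qed.

Lemma nth_bw r j w i : i < index j.+1 (base w) -> i < j ->
  nth (0,0) (bw r j w) i = nth (0,0) w i.
Proof.
move=> Hi Hj; rewrite /bw; case: ltnP => _; rewrite nth_take //.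
by rewrite nth_set_nth /= ltn_eqF.
Qed.

Lemma perm_del j (s : word) : perm_eq (base s) (iota 1 j.+1) ->
  perm_eq (base (delete_at (index j.+1 (base s)) s)) (iota 1 j).
Proof.
move=> P; have [Hs Hp Hnp _ C] := perm_facts P.
apply: permPn => a; have Ca := C a.
rewrite /delete_at base_cat base_take base_drop count_cat.
set p := index j.+1 (base s).
have Hps : p < size (base s) by rewrite Hs.
have Tu := cnt_take a Hps. rewrite Hnp in Tu. lia.
Qed.

Lemma nth_del q (s : word) k : q < size s -> k < q ->
  nth (0,0) (delete_at q s) k = nth (0,0) s k.
Proof.
move=> Hq Hk; rewrite /delete_at nth_cat size_takel ?Hk ?nth_take //; exact: ltnW.
Qed.

Lemma bound_lemma r j : forall (w s : word),
  perm_eq (base w) (iota 1 j) -> perm_eq (base s) (iota 1 j) ->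
  bcode_rec r j w = acode_rec j s ->
  forall i, i < j -> nth 0 (base w) i <= \max_(k < i.+1) nth 0 (base s) k.
Proof.
elim: j => [|j IH] w s Pw Ps E i Hi //.
rewrite bcode_S acode_S in E.
case/rcons_inj: E => E1 [Epq _].
have [Hsw Hpw Hnw Uw Cw] := perm_facts Pw.
have [Hss Hps Hns Us Cs] := perm_facts Ps.
have Pw' := perm_bw r Pw.
have Ps' := perm_del Ps.
set p := index j.+1 (base w) in Epq Hpw Hnw.
set q := index j.+1 (base s) in Epq Hps Hns.
case: (ltnP i p) => Hip.
- have Hij : i < j by lia.
  have Hss' : size s = j.+1 by rewrite -Hss size_map.
  have := IH _ _ Pw' Ps' E1 i Hij.
  have -> : nth 0 (base (bw r j w)) i = nth 0 (base w) i.
    by rewrite !nth_base nth_bw.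
  move=> H; apply: (leq_trans H).
  rewrite leq_eqVlt; apply/orP; left; apply/eqP; apply: eq_bigr => k _.
  have Hk := ltn_ord k.
  rewrite -/q !nth_base nth_del //; [rewrite Hss' // | lia].
- have Hin : nth 0 (base w) i \in base w by apply: mem_nth; rewrite Hsw.
  rewrite (perm_mem Pw) mem_iota in Hin.
  have Hq : q < i.+1 by lia.
  apply: (@leq_trans j.+1); first by lia.
  have := @leq_bigmax _ (fun k : 'I_i.+1 => nth 0 (base s) k) (Ordinal Hq).
  by rewrite /= Hns.
Qed.
Lemma L1 r e : e < r -> (r - (r - e) %% r %% r) %% r = e.
Proof.
case: e => [|e] H; first by rewrite subn0 modnn mod0n subn0 modnn.
have H' : r - e.+1 < r by lia.
rewrite !(modn_small H') (_ : r - (r - e.+1) = e.+1); last by lia.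
by rewrite modn_small.
Qed.
Lemma L2 r x e : x < r -> e < r -> ((x + e) %% r + r - e) %% r = x.
Proof.
move=> H1 H2; case: (ltnP (x + e) r) => H.
- rewrite (modn_small H) (_ : x + e + r - e = x + r); last by lia.
  by rewrite modnDr modn_small.
- have -> : x + e = (x + e - r) + r by lia.
  have H3 : x + e - r < r by lia.
  rewrite modnDr (modn_small H3).
  rewrite (_ : x + e - r + r - e = x); last by lia.
  by rewrite modn_small.
Qed.


Definition colok (r : nat) (w : word) := all (fun l : letter => l.2 < r) w.

Lemma all_set_nth r (w : word) p x : 0 < r -> colok r w -> x.2 < r ->
  colok r (set_nth (0,0) w p x).
Proof.
move=> r0; rewrite /colok; elim: w p => [|a w IH] p.
- move=> _ Hx; rewrite set_nth_nil; elim: p => [|p IHp] /=; first by rewrite Hx.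
  by rewrite r0 IHp.
- by case: p => [|p] /= /andP [Ha Hw] Hx; rewrite ?Hx ?Ha ?IH.
Qed.

Definition step (r j : nat) (w0 : word) (p e : nat) : word :=
  if p < j then rcons (set_nth (0,0) w0 p (j.+1, (r - e) %% r))
                  ((nth (0,0) w0 p).1, ((nth (0,0) w0 p).2 + e) %% r)
  else rcons w0 (j.+1, (r - e) %% r).

Lemma step_ok r j w0 p e : 0 < r -> perm_eq (base w0) (iota 1 j) -> colok r w0 ->
  p <= j -> e < r ->
  [/\ perm_eq (base (step r j w0 p e)) (iota 1 j.+1), colok r (step r j w0 p e) &
      bcode_rec r j.+1 (step r j w0 p e) = rcons (bcode_rec r j w0) (p.+1, e)].
Proof.
move=> r0 P0 C0 Hpj He.
have Hs0 : size (base w0) = j by rewrite (perm_size P0) size_iota.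
have Hs0' : size w0 = j by rewrite -Hs0 size_map.
set w := step r j w0 p e.
have Hsw : size w = j.+1.
  rewrite /w /step; case: ifP => H; rewrite size_rcons ?size_set_nth Hs0' //; lia.
have Hwp : nth (0,0) w p = (j.+1, (r - e) %% r).
  rewrite /w /step; case: ifP => H.
  + by rewrite nth_rcons size_set_nth Hs0' (_ : p < maxn p.+1 j) ?nth_set_nth /= ?eqxx //; lia.
  + by rewrite nth_rcons Hs0' (_ : p = j) ?ltnn ?eqxx //; lia.
have Pw : perm_eq (base w) (iota 1 j.+1).
  apply: permPn => a; rewrite iotaS1 count_rc.
  rewrite /w /step; case: ifP => H.
  + rewrite base_rcons base_set_nth count_rc count_set_nth_ltn ?Hs0 // /= -nth_base.
    have Hps : p < size (base w0) by rewrite Hs0.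
    have := cnt_nth a Hps; have := (permP P0) a.
    move: (count a (base w0)) (count a (iota 1 j)) => X Y.
    by rewrite /= => ->; lia.
  + rewrite base_rcons count_rc /=.
    by rewrite (permP P0).
have Cw : colok r w.
  rewrite /w /step /colok; case: ifP => H; rewrite all_rcons /=.
  + have Hp : p < size w0 by rewrite Hs0'.
    rewrite ltn_mod r0 /=.
    by apply: all_set_nth => //=; rewrite ltn_mod.
  + by rewrite ltn_mod r0; exact: C0.
split => //.
have [_ _ _ Uw _] := perm_facts Pw.
have Hidx : index j.+1 (base w) = p.
  have Hp : p < size (base w) by rewrite size_map Hsw; lia.
  have := index_uniq 0 Hp Uw; by rewrite nth_base Hwp.
have Hbe : be r j w = e by rewrite /be Hidx Hwp /= L1.
rewrite bcode_S Hidx Hbe; congr (rcons (bcode_rec r j _) _).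
rewrite /bw Hidx ltnS Hwp /= L1 //.
rewrite /w /step; case: ltnP => H.
- have Hp : p < size w0 by rewrite Hs0'.
  have Ct : (nth (0,0) w0 p).2 < r by apply: (all_nthP (0,0) C0).
  rewrite nth_rcons size_set_nth Hs0' (_ : maxn p.+1 j = j); last by lia.
  rewrite ltnn eqxx /= L2 //.
  apply: (@eq_from_nth _ (0,0)).
  + rewrite size_takel // size_set_nth size_rcons size_set_nth Hs0'; lia.
  + move=> i; rewrite size_takel; last by rewrite size_set_nth size_rcons size_set_nth Hs0'; lia.
    move=> Hi; rewrite nth_take // nth_set_nth /=.
    case: eqP => [->|Hne]; first by case: (nth (0,0) w0 p).
    rewrite nth_rcons size_set_nth Hs0' (_ : i < maxn p.+1 j); last by lia.
    by rewrite nth_set_nth /=; case: eqP.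
- have pj : p = j by lia.
  by rewrite -[X in take X _]Hs0' -cats1 take_size_cat.
Qed.

Lemma colok_del r q (s : word) : colok r s -> colok r (delete_at q s).
Proof.
move=> C; rewrite /colok /delete_at all_cat.
have C1 := C; rewrite /colok -(cat_take_drop q s) all_cat in C1.
have C2 := C; rewrite /colok -(cat_take_drop q.+1 s) all_cat in C2.
by case/andP: C1 => -> _; case/andP: C2.
Qed.

Lemma exist_lemma r j : 0 < r -> forall s : word,
  perm_eq (base s) (iota 1 j) -> colok r s ->
  exists w, [/\ perm_eq (base w) (iota 1 j), colok r w & bcode_rec r j w = acode_rec j s].
Proof.
move=> r0; elim: j => [|j IH] s Ps Cs; first by exists [::].
have [Hss Hps Hns _ _] := perm_facts Ps.
have [w0 [P0 C0 E0]] := IH _ (perm_del Ps) (colok_del _ Cs).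
set q := index j.+1 (base s) in Hps Hns E0 *.
have Hq : q < size s by rewrite -(size_map fst) -/(base s) Hss.
have Ce : (nth (0,0) s q).2 < r by apply: (all_nthP (0,0) Cs).
have Hqj : q <= j by rewrite -ltnS.
have [P C E] := step_ok r0 P0 C0 Hqj Ce.
exists (step r j w0 q (nth (0,0) s q).2); split => //.
by rewrite E acode_S -/q E0.
Qed.

Theorem lemma4p4 (r n : nat) (pi : word) :
  0 < r -> in_G r n pi ->
  (exists pi' : word, in_G r n pi' /\ Bcode r n pi' = Acode n pi) /\
  (forall pi' : word, in_G r n pi' -> Bcode r n pi' = Acode n pi ->
     in_Gf r n (minseq pi) pi').
Proof.
move=> r0 /andP [/andP [/eqP Hsz P] C]; split.
- have [w [Pw Cw Ew]] := exist_lemma r0 P C.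
  exists w; split => //; rewrite /in_G Pw andbT.
  have -> : all (fun l : letter => l.2 < r) w by exact: Cw.
  by rewrite andbT -(size_map fst) -/(base w) (perm_size Pw) size_iota.
- move=> w Hw E; rewrite /in_Gf Hw /=.
  case/andP: Hw => /andP [_ Pw] _.
  apply/forallP => i.
  rewrite /minseq nth_mkseq ?Hsz //.
  exact: (bound_lemma Pw P E (ltn_ord i)).
Qed.
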